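(* Let $H_n$ be a maximal outerplanar graph with $n$ vertices and diameter $3$. Then $H_n$ contains an induced subgraph isomorphic to $G_6^1$ or to $G_6^2$.
   Context: An outerplanar graph is a graph drawable in the plane without crossings with all vertices on the outer face; it is maximal outerplanar if adding any edge between two nonadjacent vertices yields a non-outerplanar graph. $G_6^1$ is the graph on vertices $v_0,\dots,v_5$ with edges $v_1v_0, v_0v_4, v_4v_3, v_3v_5, v_5v_2, v_2v_1, v_0v_2, v_0v_3, v_2v_3$. $G_6^2$ is the graph on vertices $v_0,\dots,v_5$ with edges $v_0v_1, v_1v_2, v_2v_0, v_0v_3, v_2v_3, v_3v_4, v_4v_0, v_3v_5, v_5v_4$ (the fan with center $v_0$ over the path $v_1v_2v_3v_4$, plus a vertex $v_5$ adjacent to $v_3$ and $v_4$). *)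

(* Defs.v *)
From mathcomp Require Import all_boot.
Set Implicit Arguments. Unset Strict Implicit. Unset Printing Implicit Defensive.

Definition simple_graph (T : finType) (e : rel T) : Prop :=
  (forall x y, e x y = e y x) /\ (forall x, ~~ e x x).

(* Outerplanar drawing: vertices placed (injectively) in order on a circle,
   edges drawn as chords, and no two chords cross.  Chords ab and cd cross
   iff the positions interleave: pos a < pos c < pos b < pos d (up to the
   symmetry of edges, which the quantification over all edges covers). *)
Definition outerplanar (T : finType) (e : rel T) : Prop :=
  exists pos : T -> nat, injective pos /\
    forall a b c d, e a b -> e c d ->
      ~ (pos a < pos c /\ pos c < pos b /\ pos b < pos d).

Definition add_edge (T : finType) (e : rel T) (x y : T) : rel T :=
  fun u v => [|| e u v, (u == x) && (v == y) | (u == y) && (v == x)].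

Definition maximal_outerplanar (T : finType) (e : rel T) : Prop :=
  outerplanar e /\
  forall x y, x != y -> ~~ e x y -> ~ outerplanar (add_edge e x y).

Fixpoint within (T : finType) (e : rel T) (k : nat) (x y : T) : bool :=
  match k with
  | 0 => x == y
  | k'.+1 => within e k' x y || [exists z, e x z && within e k' z y]
  end.

Definition diameter_eq (T : finType) (e : rel T) (d : nat) : Prop :=
  (forall x y, within e d x y) /\
  (d > 0 -> exists x y, ~~ within e d.-1 x y).

Definition rel_of_edges (n : nat) (s : seq (nat * nat)) : rel 'I_n :=
  fun i j => ((nat_of_ord i, nat_of_ord j) \in s) || ((nat_of_ord j, nat_of_ord i) \in s).

Definition G61 : rel 'I_6 :=
  @rel_of_edges 6 [:: (1,0); (0,4); (4,3); (3,5); (5,2); (2,1); (0,2); (0,3); (2,3)].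

Definition G62 : rel 'I_6 :=
  @rel_of_edges 6 [:: (0,1); (1,2); (2,0); (0,3); (2,3); (3,4); (4,0); (3,5); (5,4)].

Definition has_induced (T : finType) (e : rel T) (n : nat) (H : rel 'I_n) : Prop :=
  exists f : 'I_n -> T, injective f /\ forall i j, e (f i) (f j) = H i j.

(* Main.v *)
Require Import Defs.
From mathcomp Require Import all_boot.
From mathcomp Require Import zify.
From Stdlib Require Import Lia.
From Stdlib Require Import Classical.

Set Implicit Arguments. Unset Strict Implicit. Unset Printing Implicit Defensive.

Section Aux.
Variables (T : finType) (e : rel T).
Hypothesis sym : forall x y, e x y = e y x.
Hypothesis irr : forall x, ~~ e x x.
Hypothesis mop : maximal_outerplanar e.

Ltac nlia := repeat match goal with
  | Hx : is_true (e _ _) |- _ => clear Hx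
  | Hx : is_true (~~ e _ _) |- _ => clear Hx
  | Hx : e _ _ \/ e _ _ |- _ => clear Hx
  end; lia.

Definition ncr (pos : T -> nat) := forall a b c d, e a b -> e c d ->
      ~ (pos a < pos c /\ pos c < pos b /\ pos b < pos d).

Definition ilv (pa pb pc pd : nat) : Prop :=
  ((pa < pc < pb \/ pb < pc < pa) /\ (pd < pa /\ pd < pb \/ pa < pd /\ pb < pd)) \/
  ((pa < pd < pb \/ pb < pd < pa) /\ (pc < pa /\ pc < pb \/ pa < pc /\ pb < pc)).

Lemma cross_false pos a b c d : ncr pos -> e a b -> e c d ->
  ilv (pos a) (pos b) (pos c) (pos d) -> False.
Proof.
move=> H Hab Hcd; have Hba : e b a by rewrite sym.
have Hdc : e d c by rewrite sym.
have := H a b c d Hab Hcd; have := H a b d c Hab Hdc;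
have := H b a c d Hba Hcd; have := H b a d c Hba Hdc;
have := H c d a b Hcd Hab; have := H c d b a Hcd Hba;
have := H d c a b Hdc Hab; have := H d c b a Hdc Hba.
rewrite /ilv; nlia.
Qed.

Lemma crossed pos x y : injective pos -> ncr pos -> x != y -> ~~ e x y ->
  exists c d, e c d /\ ilv (pos x) (pos y) (pos c) (pos d).
Proof.
move=> inj H xy nxy; apply: NNPP => Hn.
apply: (mop.2 x y xy nxy); exists pos; split => // a b c d.
have Hn' : forall c d, e c d -> ~ ilv (pos x) (pos y) (pos c) (pos d).
  by move=> c' d' E I; apply: Hn; exists c', d'.
rewrite /add_edge => /or3P [Hab|/andP[/eqP-> /eqP->]|/andP[/eqP-> /eqP->]]
  /or3P [Hcd|/andP[/eqP-> /eqP->]|/andP[/eqP-> /eqP->]].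
- exact: H.
- move: (Hn' a b Hab); rewrite /ilv; nlia.
- move: (Hn' a b Hab); rewrite /ilv; nlia.
- move: (Hn' c d Hcd); rewrite /ilv; nlia.
- nlia.
- nlia.
- move: (Hn' c d Hcd); rewrite /ilv; nlia.
- nlia.
- nlia.
Qed.

Lemma tri_in pos u v z : injective pos -> ncr pos -> e u v -> pos u < pos v ->
  pos u < pos z < pos v ->
  exists w, [/\ pos u < pos w < pos v, e u w & e w v].
Proof.
move=> inj H Euv Huv Hz.
have Pz : pos u < pos z by nlia.
case: (@arg_minnP T z (fun t => pos u < pos t) pos Pz) => s Hs Hsmin.
have Eus : e u s.
  apply: NNPP => /negP Nus.
  have us : u != s by apply/eqP => E; move: Hs; rewrite E; nlia.
  have [c [d [Ecd I]]] := crossed inj H us Nus.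
  rewrite /ilv in I.
  move: (Hsmin c) (Hsmin d) => /= Hc Hd; nlia.
have Ps : (pos u < pos s < pos v) && e u s.
  by rewrite Eus andbT; have := Hsmin z Pz; nlia.
case: (@arg_maxnP T s (fun t => (pos u < pos t < pos v) && e u t) pos Ps)
   => w /andP [Hw Euw] Hwmax.
exists w; split => //.
apply: NNPP => /negP Nwv.
have wv : w != v by apply/eqP => E; move: Hw; rewrite E; nlia.
have [c [d [Ecd I]]] := crossed inj H wv Nwv.
have Edc : e d c by rewrite sym.
rewrite /ilv in I.
case: (eqVneq c u) => [cu|cu].
  subst c; move: (Hwmax d) => /=; rewrite Ecd andbT; nlia.
case: (eqVneq d u) => [du|du].
  subst d; move: (Hwmax c) => /=; rewrite Edc andbT; nlia.
have pcu : pos c != pos u by apply: contra cu => /eqP /inj ->.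
have pdu : pos d != pos u by apply: contra du => /eqP /inj ->.
have [A|A] : ilv (pos u) (pos v) (pos c) (pos d) \/ ilv (pos u) (pos w) (pos c) (pos d)
  by rewrite /ilv; nlia.
  exact: (cross_false H Euv Ecd A).
exact: (cross_false H Euw Ecd A).
Qed.

Definition rot (pos : T -> nat) (r : T) (K : nat) (z : T) :=
  if pos r <= pos z then pos z else pos z + K.

Lemma rot_ok pos r : injective pos -> ncr pos ->
  let K := (\max_z pos z).+1 in
  [/\ injective (rot pos r K), ncr (rot pos r K) & forall z, pos z < K].
Proof.
move=> inj H K.
have HK : forall z, pos z < K by move=> z; rewrite ltnS; apply: leq_bigmax.
split => //.
- move=> a b; rewrite /rot; have := HK a; have := HK b.
  case: ifP => ?; case: ifP => ? => ? ? E; apply: inj; nlia.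
- move=> a b c d Hab Hcd.
  have Hba : e b a by rewrite sym.
  have Hdc : e d c by rewrite sym.
  have := H a b c d Hab Hcd; have := H c d b a Hcd Hba;
  have := H b a d c Hba Hdc; have := H d c a b Hdc Hab.
  have := HK a; have := HK b; have := HK c; have := HK d.
  rewrite /rot; do 4 case: ifP => ?; nlia.
Qed.

Lemma tri_out pos u v z : injective pos -> ncr pos -> e u v -> pos u < pos v ->
  (pos z < pos u \/ pos v < pos z) ->
  exists w, [/\ pos w < pos u \/ pos v < pos w, e u w & e w v].
Proof.
move=> inj H Euv Huv Hz.
have [inj' H' HK] := rot_ok v inj H.
set K := (\max_z pos z).+1 in inj' H' HK.
have Evu : e v u by rewrite sym.
have := HK u; have := HK v; have := HK z => ? ? ?.
have Rv : rot pos v K v = pos v by rewrite /rot leqnn.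
have Ru : rot pos v K u = pos u + K by rewrite /rot leqNgt Huv.
have Rz : forall t, rot pos v K t = if pos v <= pos t then pos t else pos t + K by [].
have [w [Hw Evw Ewu]] : exists w, [/\ rot pos v K v < rot pos v K w < rot pos v K u,
   e v w & e w u].
  apply: (tri_in (z := z) inj' H' Evu); rewrite Rv Ru ?Rz; try case: ifP => ?; nlia.
exists w; split; first by move: Hw (HK w); rewrite Rv Ru Rz; case: ifP => ?; nlia.
- by rewrite sym.
- by rewrite sym.
Qed.

Lemma cs pos a b u v : ncr pos -> e a b -> e u v -> pos a < pos u -> pos u < pos b ->
  (pos v < pos a \/ pos b < pos v) -> False.
Proof.
move=> H Eab Euv h1 h2 [h3|h3].
- have Evu : e v u by rewrite sym.
  exact: (H v u a b Evu Eab (conj h3 (conj h1 h2))).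
- exact: (H a b u v Eab Euv (conj h1 (conj h2 h3))).
Qed.

Ltac solve_e H irr sym :=
  first [ by []
        | by rewrite sym
        | by rewrite (negbTE (irr _))
        | match goal with N : is_true (~~ e _ _) |- _ =>
            first [ by rewrite (negbTE N) | by rewrite sym (negbTE N) ] end ].

Lemma quad_G62 pos x y c c' d' d : injective pos -> ncr pos ->
  pos x < pos c -> pos c < pos c' -> pos c' < pos y -> pos y < pos d' -> pos d' < pos d ->
  e c c' -> e c' d' -> e d' d -> e d c -> (e c' d \/ e c d') -> has_induced e G62.
Proof.
move=> inj H h1 h2 h3 h4 h5 E1 E2 E3 E4 Diag.
have Ecd : e c d by rewrite sym.
have [p [Hp Ecp Epd]] := tri_out (z := x) inj H Ecd (ltn_trans h2 (ltn_trans h3 (ltn_trans h4 h5))) (or_introl h1).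
have [q [Hq Ec'q Eqd']] := tri_in (z := y) inj H E2 (ltn_trans h3 h4) (introT andP (conj h3 h4)).
have N1 : ~~ e p c' by apply/negP => Hab; apply: (cs H Ecd (u := c') (v := p)) => //; first [by rewrite sym | nlia].
have N2 : ~~ e p d' by apply/negP => Hab; apply: (cs H Ecd (u := d') (v := p)) => //; first [by rewrite sym | nlia].
have N3 : ~~ e p q by apply/negP => Hab; apply: (cs H Ecd (u := q) (v := p)) => //; first [by rewrite sym | nlia].
have N4 : ~~ e c q by apply/negP => Hab; apply: (cs H E2 (u := q) (v := c)) => //; first [by rewrite sym | nlia].
have N5 : ~~ e d q by apply/negP => Hab; apply: (cs H E2 (u := q) (v := d)) => //; first [by rewrite sym | nlia].
case: Diag => Dg.
- have N6 : ~~ e c d' by apply/negP => Hab; apply: (cs H Dg (u := d') (v := c)) => //; first [by rewrite sym | nlia].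
  exists (fun i : 'I_6 => nth x [:: d; p; c; c'; d'; q] i); split.
  + move=> [[|[|[|[|[|[|i]]]]]] Hi] [[|[|[|[|[|[|j]]]]]] Hj] //= Hij;
    apply: val_inj => /=; move: (congr1 pos Hij); nlia.
  + move=> [[|[|[|[|[|[|i]]]]]] Hi] [[|[|[|[|[|[|j]]]]]] Hj] //=;
    rewrite /G62 /rel_of_edges /=; solve_e H irr sym.
- have N6 : ~~ e c' d by apply/negP => Hab; apply: (cs H Dg (u := c') (v := d)) => //; nlia.
  exists (fun i : 'I_6 => nth x [:: c; p; d; d'; c'; q] i); split.
  + move=> [[|[|[|[|[|[|i]]]]]] Hi] [[|[|[|[|[|[|j]]]]]] Hj] //= Hij;
    apply: val_inj => /=; move: (congr1 pos Hij); nlia.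
  + move=> [[|[|[|[|[|[|i]]]]]] Hi] [[|[|[|[|[|[|j]]]]]] Hj] //=;
    rewrite /G62 /rel_of_edges /=; solve_e H irr sym.
Qed.

Lemma core pos x y : injective pos -> ncr pos -> (forall z, pos x <= pos z) ->
  x != y -> ~~ e x y -> (forall z, e x z -> e z y -> False) -> has_induced e G62.
Proof.
move=> inj H xmin xy nxy ncom.
have pxy : pos x < pos y.
  have := xmin y; have : pos x != pos y by apply: contra xy => /eqP/inj ->.
  nlia.
suff [c [c' [d' [d [[h1 h2 h3 h4 h5] [E1 E2 E3 E4 Dg]]]]]] :
  exists c c' d' d, [/\ pos x < pos c, pos c < pos c', pos c' < pos y, pos y < pos d' & pos d' < pos d] /\ [/\ e c c', e c' d', e d' d, e d c & (e c' d \/ e c d')].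
  exact: (quad_G62 inj H h1 h2 h3 h4 h5 E1 E2 E3 E4 Dg).
have step : forall n c d, pos d - pos c <= n -> e c d -> pos x < pos c -> pos c < pos y -> pos y < pos d ->
   ((exists d2, [/\ e c d2, e d d2, pos d < pos d2 & ~~ e c y]) \/
    (exists c2, [/\ e c2 d, e c2 c, pos x < pos c2, pos c2 < pos c & ~~ e d y])) ->
  exists c c' d' d, [/\ pos x < pos c, pos c < pos c', pos c' < pos y, pos y < pos d' & pos d' < pos d] /\ [/\ e c c', e c' d', e d' d, e d c & (e c' d \/ e c d')].
  elim=> [|n IH] c d Hn Ecd h1 h2 h3; first by nlia.
  have [w [hw Ecw Ewd]] := tri_in (z := y) inj H Ecd (ltn_trans h2 h3) (introT andP (conj h2 h3)).
  case=> [[d2 [Ecd2 Edd2 hd Ncy]]|[c2 [Ec2d Ec2c hc1 hc2 Ndy]]].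
  - case: (ltngtP (pos w) (pos y)) => hwy.
    + exists c, w, d, d2; split; first by split; nlia.
      by split => //; [rewrite sym | right].
    + apply: (IH c w) => //; first by nlia.
      by left; exists d; split => //; nlia.
    + have wy : w = y by apply: inj.
      by subst w; move: Ncy; rewrite Ecw.
  - case: (ltngtP (pos w) (pos y)) => hwy.
    + apply: (IH w d) => //; [nlia | nlia | ].
      by right; exists c; split => //; nlia.
    + exists c2, c, w, d; split; first by split; nlia.
      by split => //; [rewrite sym | left].
    + have wy : w = y by apply: inj.
      by subst w; move: Ndy; rewrite sym Ewd.
pose cr := fun t : T * T => [&& e t.1 t.2, pos x < pos t.1, pos t.1 < pos y & pos y < pos t.2].
have [t0 Ht0] : exists t, cr t.
  have [c [d [Ecd I]]] := crossed inj H xy nxy.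
  have := xmin c; have := xmin d => hc hd.
  have Edc : e d c by rewrite sym.
  rewrite /ilv in I.
  case: I => [[I1 I2]|[I1 I2]].
  - by exists (c, d); rewrite /cr /= Ecd /=; nlia.
  - by exists (d, c); rewrite /cr /= Edc /=; nlia.
case: (@arg_maxnP _ t0 cr (fun t => pos t.2 - pos t.1) Ht0) => [[c1 d1]] /= Hcr Hmax.
move: Hcr; rewrite /cr /= => /and4P [E1 h1 h2 h3].
have [w [hw Ec1w Ewd1]] := tri_out (z := x) inj H E1 (ltn_trans h2 h3) (or_introl h1).
case: (eqVneq w x) => [wx|wx].
  subst w.
  have [w [hw' Ecw Ewd]] := tri_in (z := y) inj H E1 (ltn_trans h2 h3) (introT andP (conj h2 h3)).
  case: (ltngtP (pos w) (pos y)) => hwy.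
  - apply: (step _ w d1 (leqnn _)) => //; try (clear Hmax; nlia).
    right; exists c1; split => //; try (clear Hmax; nlia).
    by apply/negP => Ed; apply: (ncom d1).
  - apply: (step _ c1 w (leqnn _)) => //; try (clear Hmax; nlia).
    left; exists d1; split => //; try (clear Hmax; nlia).
    by apply/negP => Ec; apply: (ncom c1) => //; rewrite sym.
  - have wy : w = y by apply: inj.
    by subst w; exfalso; apply: (ncom c1) => //; rewrite sym.
have pwx : pos x < pos w.
  have := xmin w; have : pos x != pos w by apply: contra wx => /eqP/inj ->.
  nlia.
exfalso; case: hw => hw.
- have := Hmax (w, d1); rewrite /cr /= Ewd1 /=; nlia.
- have := Hmax (c1, w); rewrite /cr /= Ec1w /=; nlia.
Qed.

End Aux.

Theorem theorem3p2 (T : finType) (e : rel T) :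
  simple_graph e -> maximal_outerplanar e -> diameter_eq e 3 ->
  has_induced e G61 \/ has_induced e G62.
Proof.
move=> [sym irr] mop [_ Hex].
have [x [y Hxy]] := Hex isT.
right.
move: Hxy => /=; rewrite !negb_or => /andP [/andP [xy Hn1] Hn2].
have nxy : ~~ e x y.
  apply/negP => Exy; move/negP: Hn1; apply; apply/existsP; exists y; by rewrite Exy eqxx.
have ncom : forall z, e x z -> e z y -> False.
  move=> z Exz Ezy; move/negP: Hn2; apply; apply/existsP; exists z; rewrite Exz /=.
  by apply/orP; right; apply/existsP; exists y; rewrite Ezy eqxx.
have [pos0 [inj0 nc0]] := mop.1.
have [inj' H' HK] := rot_ok sym x inj0 nc0.
apply: (core sym irr mop inj' H' _ xy nxy ncom).
move=> z; rewrite /rot leqnn; case: ifP => // _.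
have := HK x; lia.
Qed.
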